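(* For every $n\ge 3$ and every Greene–Kleitman chain $C$ in $Q_n$ with $|C|\ge 3$, the chains $f( *C* )$ and $f( *\ell(C)* )$ are connected at their bottom ends in $Q_{n+2}$. Specifically, if $C=u*C'$ with $u\in D$ and $C'$ containing at least two $*$s, then $f( *C* )=0\,u\,1\,C'\,*$ and $f( *\ell(C)* )=0\,u\,1\,\ell(C')\,*$; i.e., the chains $f( *C* )$ and $f( *\ell(C)* )$ differ in exactly two positions.
   Context: $Q_n$ is the hypercube on $\{0,1\}^n$. Let $D$ be the set of bitstrings (including the empty string) with equally many $0$s and $1$s such that every prefix has at least as many $0$s as $1$s. A Greene–Kleitman chain in $Q_n$ is a string of length $n$ over $\{0,1,*\}$ of the form $u_0*u_1*\cdots*u_{h-1}*u_h$ with all $u_j\in D$, representing the path whose vertices are obtained by replacing the $*$s by $i$ ones followed by $h-i$ zeros; $|C|=h$ is its number of $*$s, and its bottom end $b(C)$ is obtained by replacing all $*$s by $0$. For a string $C$ over $\{0,1,*\}$ with at least two $*$s, $f(C)$ (resp. $\ell(C)$) is obtained by replacing the first two (resp. last two) $*$s by $0$ and $1$, respectively. Juxtaposition denotes concatenation. Two chains are connected at their bottom ends if their bottom ends differ in exactly one position. *)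

(* Defs.v *)
From HB Require Import structures.
From mathcomp Require Import all_boot.
Set Implicit Arguments. Unset Strict Implicit. Unset Printing Implicit Defensive.

Inductive sym := Zero | One | Star.

Definition sym_eqb (a b : sym) : bool :=
  match a, b with
  | Zero, Zero | One, One | Star, Star => true
  | _, _ => false end.
Lemma sym_eqP : Equality.axiom sym_eqb.
Proof. by case; case; constructor. Qed.
HB.instance Definition _ := hasDecEq.Build sym sym_eqP.

Definition bit (b : bool) : sym := if b then One else Zero.

(* D : equally many 0s and 1s, every prefix has at least as many 0s as 1s.
   Checked with a running height (number of 0s minus number of 1s). *)
Fixpoint dyck_from (h : nat) (s : seq bool) : bool :=
  match s with
  | [::] => h == 0
  | false :: t => dyck_from h.+1 t
  | true :: t => (0 < h) && dyck_from h.-1 t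
  end.
Definition dyck (s : seq bool) : bool := dyck_from 0 s.

Fixpoint join_star (us : seq (seq bool)) : seq sym :=
  match us with
  | [::] => [::]
  | [:: u] => map bit u
  | u :: us' => map bit u ++ Star :: join_star us'
  end.

Definition is_GK (C : seq sym) : Prop :=
  exists us : seq (seq bool), us != [::] /\ all dyck us /\ C = join_star us.

(* |C| = number of stars *)
Definition nstars (C : seq sym) : nat := count (pred1 Star) C.

(* replace the star of index k (counted from 0, left to right) by 0 and
   the star of index k+1 by 1 *)
Fixpoint repl_from (k i : nat) (C : seq sym) : seq sym :=
  match C with
  | [::] => [::]
  | Star :: t =>
      (if i == k then Zero else if i == k.+1 then One else Star)
        :: repl_from k i.+1 t
  | x :: t => x :: repl_from k i t
  end.

Definition fC (C : seq sym) : seq sym := repl_from 0 0 C.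
Definition lC (C : seq sym) : seq sym := repl_from (nstars C - 2) 0 C.

Definition starwrap (C : seq sym) : seq sym := Star :: C ++ [:: Star].

Definition bottom (C : seq sym) : seq sym :=
  map (fun x => if x == Star then Zero else x) C.

Definition ndiff (s t : seq sym) : nat :=
  count (fun p => p.1 != p.2) (zip s t).

Definition connected_bottom (C1 C2 : seq sym) : bool :=
  (size C1 == size C2) && (ndiff (bottom C1) (bottom C2) == 1).

(* Main.v *)
Require Import Defs.
From mathcomp Require Import all_boot.

Lemma nstars_cat s t : nstars (s ++ t) = nstars s + nstars t.
Proof. by rewrite /nstars count_cat. Qed.

Lemma nstars_bit u : nstars (map bit u) = 0.
Proof. by elim: u => [|[] u IH] //. Qed.

Lemma repl_cat k i s t :
  repl_from k i (s ++ t) = repl_from k i s ++ repl_from k (i + nstars s) t.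
Proof.
elim: s i => [|x s IH] i /=; first by rewrite addn0.
by case: x => /=; rewrite IH // /nstars /= addSnnS.
Qed.

Lemma repl_bit k i u : repl_from k i (map bit u) = map bit u.
Proof. by elim: u => [|[] u IH] //=; rewrite IH. Qed.

Lemma repl_shift k i s : repl_from k.+1 i.+1 s = repl_from k i s.
Proof. by elim: s i => [|[] s IH] i //=; rewrite IH. Qed.

Lemma repl_id k i s : k.+1 < i -> repl_from k i s = s.
Proof.
elim: s i => [|[] s IH] i hi //=; try by rewrite IH.
have -> : (i == k) = false by apply/negbTE; rewrite neq_ltn; apply/orP; right; apply: ltn_trans hi.
have -> : (i == k.+1) = false by apply/negbTE; rewrite neq_ltn hi orbT.
by rewrite IH // ltnW.
Qed.

Lemma repl_size k i s : size (repl_from k i s) = size s.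
Proof. by elim: s i => [|[] s IH] i //=; rewrite IH. Qed.

Lemma ndiff_cons x s t : ndiff (x :: s) (x :: t) = ndiff s t.
Proof. by rewrite /ndiff /= eqxx. Qed.

Lemma ndiff_catl p s t : ndiff (p ++ s) (p ++ t) = ndiff s t.
Proof. by elim: p => //= x p IH; rewrite ndiff_cons. Qed.

Lemma ndiff_catr s t q : size s = size t -> ndiff (s ++ q) (t ++ q) = ndiff s t.
Proof.
move=> hs; rewrite /ndiff zip_cat // count_cat.
suff -> : count (fun p : sym * sym => p.1 != p.2) (zip q q) = 0 by rewrite addn0.
by elim: q => //= x q ->; rewrite eqxx.
Qed.

Lemma ndiff_repl k i s :
  ndiff s (repl_from k i s) = count (fun j => (j == k) || (j == k.+1)) (iota i (nstars s)).
Proof.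
elim: s i => [|x s IH] i //=.
case: x => /=; rewrite ?ndiff_cons ?IH //.
rewrite /ndiff /= -/(ndiff _ _) IH /nstars /= -/(nstars s) /=.
by case: (i == k) => //; case: (i == k.+1).
Qed.

Lemma ndiff_bot k i s :
  ndiff (bottom s) (bottom (repl_from k i s)) = count (pred1 k.+1) (iota i (nstars s)).
Proof.
elim: s i => [|x s IH] i //=.
case: x => /=; rewrite ?ndiff_cons ?IH //.
rewrite /ndiff /= -/(ndiff _ _) IH.
rewrite add0n; case: (i =P k) => [->|_]; first by rewrite (ltn_eqF (ltnSn k)). by case: (i == k.+1).
Qed.

Lemma count_last2 (P : pred nat) k :
  (forall j, j < k -> P j = false) ->
  count P (iota 0 (k.+2)) = P k + P k.+1.
Proof.
move=> h; rewrite -addn2 iotaD count_cat /= addn0 add0n.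
rewrite (eq_in_count (a2 := pred0)) ?count_pred0 //.
by move=> j; rewrite mem_iota add0n /= => /h.
Qed.

Lemma main_eqs u C' : 2 <= nstars C' ->
  fC (starwrap (map bit u ++ Star :: C')) = Zero :: map bit u ++ One :: C' ++ [:: Star] /\
  fC (starwrap (lC (map bit u ++ Star :: C'))) = Zero :: map bit u ++ One :: lC C' ++ [:: Star].
Proof.
move=> h; split.
  rewrite /fC /starwrap /= -catA repl_cat repl_bit nstars_bit /= repl_id //.
rewrite /lC nstars_cat nstars_bit /nstars /= -/(nstars C').
case: (nstars C') h => [|[|m]] // _.
rewrite add0n add1n !subn2 /= repl_cat repl_bit nstars_bit /=.
rewrite (repl_shift m 0) /fC /starwrap /= -catA repl_cat repl_bit nstars_bit /= repl_id //.
Qed.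

Theorem lemma21 (n : nat) (C : seq sym) :
  3 <= n -> size C = n -> is_GK C -> 3 <= nstars C ->
  [/\ connected_bottom (fC (starwrap C)) (fC (starwrap (lC C))),
      size (fC (starwrap C)) = size (fC (starwrap (lC C))),
      ndiff (fC (starwrap C)) (fC (starwrap (lC C))) = 2 &
      forall (u : seq bool) (C' : seq sym),
        dyck u -> C = map bit u ++ Star :: C' -> 2 <= nstars C' ->
        fC (starwrap C) = Zero :: map bit u ++ One :: C' ++ [:: Star] /\
        fC (starwrap (lC C)) = Zero :: map bit u ++ One :: lC C' ++ [:: Star]].
Proof.
move=> _ _ [us [hne [_ hC]]] h3.
have [u [C' [hCe h2]]] : exists u C', C = map bit u ++ Star :: C' /\ 2 <= nstars C'.
  case: us hne hC => [|u [|u' us']] // _ hC.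
    by move: h3; rewrite hC nstars_bit.
  exists u, (join_star (u' :: us')); split => //.
  by move: h3; rewrite hC nstars_cat nstars_bit /nstars /=.
have [eA eB] := main_eqs u C' h2.
have hsz : size (fC (starwrap C)) = size (fC (starwrap (lC C))).
  by rewrite hCe eA eB /= !size_cat /= !size_cat /lC repl_size.
have hsz' : size C' = size (lC C') by rewrite repl_size.
have hk : (nstars C' - 2).+2 = nstars C' by rewrite -addn2 subnK.
split => //.
- rewrite /connected_bottom hsz eqxx andTb.
  rewrite hCe eA eB /bottom !(map_cons, map_cat).
  rewrite ndiff_cons ndiff_catl ndiff_cons ndiff_catr; last by rewrite !size_map.
  rewrite /lC ndiff_bot; move: hk; set k := nstars C' - 2 => hk.
  rewrite -hk count_last2 /=; first by rewrite eqxx (ltn_eqF (ltnSn k)).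
  by move=> j hj; apply: ltn_eqF; apply: ltn_trans hj (ltnSn k).
- rewrite hCe eA eB ndiff_cons ndiff_catl ndiff_cons ndiff_catr //.
  rewrite /lC ndiff_repl; move: hk; set k := nstars C' - 2 => hk.
  rewrite -hk count_last2 /=; first by rewrite !eqxx orbT.
  by move=> j hj; rewrite ltn_eqF // ltn_eqF //; apply: ltn_trans hj (ltnSn k).
- move=> v D _ hv hD; rewrite hv; exact: main_eqs.
Qed.
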